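(* Let $\mathcal X$ be a finite set. For every $\varepsilon>0$ there exist $\xi>0$ and $n_0>0$ such that for every $n>n_0$ the following holds. Suppose $\mu\in\mathcal P(\mathcal X^n)$ is $\xi$-homogeneous with respect to partitions $(\vec V,\vec S)$ of $[n]$ and $\mathcal X^n$, and $j\in[\#\vec S]$ is such that $\mu(S_j)>0$ and $\mu[\,\cdot\,|S_j]$ is $\xi$-regular with respect to $\vec V$. Then for every $\sigma\in S_j$, $$\sum_{i\in[\#\vec V]}\sum_{x\in V_i}\left\|\mu_x[\,\cdot\,|S_j]-\sigma[\,\cdot\,|V_i]\right\|_{TV}<\varepsilon n.$$
   Context: Notation: $\mathcal P(\mathcal X^n)$ is the set of probability measures on $\mathcal X^n$. For $\mu\in\mathcal P(\mathcal X^n)$, $\langle\cdot\rangle_\mu$ denotes expectation over $\boldsymbol\sigma\sim\mu$; $\mu_x$ is the marginal of coordinate $x$, and $\mu[\cdot|S]$, $\mu_x[\cdot|S]$ are $\mu$ and its marginal conditioned on $S\subset\mathcal X^n$. For $\emptyset\neq U\subset[n]$ and $\sigma\in\mathcal X^n$, $\sigma[\cdot|U]\in\mathcal P(\mathcal X)$ is $\sigma[\omega|U]=|U|^{-1}\sum_{u\in U}\mathbf 1\{\sigma(u)=\omega\}$. For a partition $\vec V=(V_1,\ldots,V_l)$, $\#\vec V=l$ is its size. Regularity: $\mu$ is $\varepsilon$-regular on $U\subset[n]$ if for every $S\subset U$ with $|S|\geq\varepsilon|U|$, $\langle\|\boldsymbol\sigma[\cdot|S]-\boldsymbol\sigma[\cdot|U]\|_{TV}\rangle_\mu<\varepsilon$.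 $\mu$ is $\varepsilon$-regular with respect to a partition $\vec V$ of $[n]$ if there is $J\subset[\#\vec V]$ with $\sum_{i\in J}|V_i|\geq(1-\varepsilon)n$ and $\mu$ is $\varepsilon$-regular on $V_i$ for all $i\in J$. Homogeneity: for partitions $\vec V$ of $[n]$ and $\vec S=(S_1,\ldots,S_{\#\vec S})$ of $\mathcal X^n$, $\mu$ is $\varepsilon$-homogeneous w.r.t. $(\vec V,\vec S)$ if there is $I\subset[\#\vec S]$ with: (HM1) $\mu(S_i)>0$ for all $i\in I$ and $\sum_{i\in I}\mu(S_i)\geq1-\varepsilon$; (HM2) for all $i\in[\#\vec S]$, $j\in[\#\vec V]$, $\max_{\sigma,\sigma'\in S_i}\|\sigma[\cdot|V_j]-\sigma'[\cdot|V_j]\|_{TV}<\varepsilon$; (HM3) for all $i\in I$, $\mu[\cdot|S_i]$ is $\varepsilon$-regular w.r.t. $\vec V$; (HM4) $\mu$ is $\varepsilon$-regular w.r.t. $\vec V$. *)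

(* Defs.v *)
From HB Require Import structures.
From mathcomp Require Import all_boot all_order all_algebra.
Set Implicit Arguments. Unset Strict Implicit. Unset Printing Implicit Defensive.
Import Order.TTheory GRing.Theory Num.Theory.
Local Open Scope ring_scope.

Section Defs.
Variables (R : realFieldType) (X : finType) (n : nat).

Notation conf := {ffun 'I_n -> X}.

Definition is_prob (mu : {ffun conf -> R}) : Prop :=
  (forall s, 0 <= mu s) /\ \sum_(s : conf) mu s = 1.

Definition mass (mu : {ffun conf -> R}) (S : {set conf}) : R :=
  \sum_(s in S) mu s.

Definition cond (mu : {ffun conf -> R}) (S : {set conf}) : {ffun conf -> R} :=
  [ffun s => if s \in S then mu s / mass mu S else 0].

Definition marg (mu : {ffun conf -> R}) (x : 'I_n) : {ffun X -> R} :=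
  [ffun w => \sum_(s : conf | s x == w) mu s].

Definition expect (mu : {ffun conf -> R}) (f : conf -> R) : R :=
  \sum_(s : conf) mu s * f s.

Definition emp (s : conf) (U : {set 'I_n}) : {ffun X -> R} :=
  [ffun w => #|[set u in U | s u == w]|%:R / #|U|%:R].

Definition tv (p q : {ffun X -> R}) : R :=
  2^-1 * \sum_w `|p w - q w|.

Definition regular_on (mu : {ffun conf -> R}) (eps : R) (U : {set 'I_n}) : Prop :=
  forall S : {set 'I_n}, S \subset U -> eps * #|U|%:R <= #|S|%:R ->
    expect mu (fun s => tv (emp s S) (emp s U)) < eps.

Definition regular_wrt (mu : {ffun conf -> R}) (eps : R)
    (PV : {set {set 'I_n}}) : Prop :=
  exists J : {set {set 'I_n}}, J \subset PV /\
    (1 - eps) * n%:R <= (\sum_(B in J) #|B|)%:R /\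
    (forall B, B \in J -> regular_on mu eps B).

Definition homogeneous (mu : {ffun conf -> R}) (eps : R)
    (PV : {set {set 'I_n}}) (PS : {set {set conf}}) : Prop :=
  exists I : {set {set conf}}, I \subset PS /\
    ((forall S, S \in I -> 0 < mass mu S) /\ 1 - eps <= \sum_(S in I) mass mu S) /\
    (forall S B, S \in PS -> B \in PV -> forall s s', s \in S -> s' \in S ->
        tv (emp s B) (emp s' B) < eps) /\
    (forall S, S \in I -> regular_wrt (cond mu S) eps PV) /\
    regular_wrt mu eps PV.

End Defs.

(* Main.v *)
Require Import Defs.
From HB Require Import structures.
From mathcomp Require Import all_boot all_order all_algebra.
From mathcomp Require Import lra ring.
Import Order.TTheory GRing.Theory Num.Theory.
Local Open Scope ring_scope.

Section Help.
Variables (R : realFieldType) (X : finType) (n : nat).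
Variable nu : {ffun {ffun 'I_n -> X} -> R}.
Hypothesis nu_ge0 : forall s, 0 <= nu s.
Hypothesis nu_sum1 : \sum_s nu s = 1.

Lemma marg_ge0 x w : 0 <= marg nu x w.
Proof. by rewrite ffunE; apply: sumr_ge0 => s _. Qed.

Lemma marg_le1 x w : marg nu x w <= 1.
Proof.
rewrite ffunE -nu_sum1 [X in _ <= X](bigID (fun s : {ffun 'I_n -> X} => s x == w)) /=.
by rewrite lerDl; apply: sumr_ge0.
Qed.

Lemma emp_ge0 s (U : {set 'I_n}) w : 0 <= @emp R X n s U w.
Proof. by rewrite ffunE divr_ge0. Qed.

Lemma emp_le1 s (U : {set 'I_n}) w : @emp R X n s U w <= 1.
Proof.
rewrite ffunE; have [->|hU] := posnP #|U|; first by rewrite invr0 mulr0.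
rewrite ler_pdivrMr ?ltr0n // mul1r ler_nat.
by apply: subset_leq_card; apply/subsetP => u; rewrite inE => /andP[].
Qed.

Lemma abs01 (a b : R) : 0 <= a -> a <= 1 -> 0 <= b -> b <= 1 -> `|a - b| <= 1.
Proof. move=> *; rewrite ler_norml; apply/andP; split; lra. Qed.

Lemma term_le_tv (p q : {ffun X -> R}) w : `|p w - q w| <= 2 * tv p q.
Proof.
rewrite /tv mulrA mulfV ?mul1r ?pnatr_eq0 //.
rewrite (bigD1 w) //= lerDl; exact: sumr_ge0.
Qed.

Lemma tv_le (p q : {ffun X -> R}) :
  (forall w, 0 <= p w <= 1) -> (forall w, 0 <= q w <= 1) -> tv p q <= #|X|%:R.
Proof.
move=> hp hq; rewrite /tv.
have h : \sum_w `|p w - q w| <= #|X|%:R.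
  rewrite -sum1_card natr_sum; apply: ler_sum => w _.
  by case/andP: (hp w) => ? ?; case/andP: (hq w) => ? ?; apply: abs01.
have h0 : 0 <= \sum_w `|p w - q w| by apply: sumr_ge0.
lra.
Qed.

Lemma sum_marg (S : {set 'I_n}) w : (0 < #|S|)%N ->
  \sum_(x in S) marg nu x w = #|S|%:R * expect nu (fun s => @emp R X n s S w).
Proof.
move=> hS.
under eq_bigr do rewrite ffunE big_mkcond /=.
rewrite exchange_big /expect big_distrr /=; apply: eq_bigr => s _.
rewrite ffunE mulrCA [_ * (_ / _)]mulrCA mulfV ?pnatr_eq0 -?lt0n // mulr1 mulrC.
rewrite -sum1_card natr_sum mulr_suml [in RHS]big_mkcond [LHS]big_mkcond /=.
apply: eq_bigr => x _; rewrite inE.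
by case: (x \in S); case: (s x == w); rewrite /= ?mul1r.
Qed.

Lemma key (B S : {set 'I_n}) w (p xi : R) :
  (0 < #|S|)%N ->
  expect nu (fun s => tv (@emp R X n s S) (@emp R X n s B)) < xi ->
  (forall s, 0 < nu s -> `|@emp R X n s B w - p| <= 2 * xi) ->
  `|\sum_(x in S) (marg nu x w - p)| <= 4 * xi * #|S|%:R.
Proof.
move=> hS hreg hB.
have e1 : \sum_(x in S) (marg nu x w - p) =
    #|S|%:R * \sum_s nu s * (@emp R X n s S w - p).
  rewrite sumrB sum_marg // sumr_const /expect.
  under [X in _ = _ * X]eq_bigr do rewrite mulrBr.
  by rewrite sumrB -mulr_suml nu_sum1 mul1r mulrBr mulr_natl mulr_natl.
rewrite e1 normrM ger0_norm ?ler0n // mulrC ler_pM2r ?ltr0n //.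
apply: le_trans (ler_norm_sum _ _ _) _.
have h2 : \sum_s `|nu s * (@emp R X n s S w - p)| <=
    \sum_s (2 * (nu s * tv (@emp R X n s S) (@emp R X n s B)) + nu s * (2 * xi)).
  apply: ler_sum => s _; rewrite normrM ger0_norm // mulrCA -mulrDr.
  have [hz|hnz] := eqVneq (nu s) 0; first by rewrite hz !mul0r.
  apply: ler_wpM2l => //.
  have h3 := term_le_tv (@emp R X n s S) (@emp R X n s B) w.
  have h4 := ler_distD (@emp R X n s B w) (@emp R X n s S w) p.
  have h5 := hB s ltac:(by rewrite lt0r hnz nu_ge0).
  lra.
apply: le_trans h2 _.
rewrite big_split /= -mulr_sumr -mulr_suml nu_sum1 mul1r.
rewrite /expect in hreg; lra.
Qed.

Lemma lemG (B S : {set 'I_n}) w (p xi : R) :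
  0 < xi -> S \subset B -> regular_on nu xi B ->
  0 <= p -> p <= 1 ->
  (forall s, 0 < nu s -> `|@emp R X n s B w - p| <= 2 * xi) ->
  `|\sum_(x in S) (marg nu x w - p)| <= 4 * xi * #|B|%:R.
Proof.
move=> hxi sSB hreg hp0 hp1 hB.
have hSB : (#|S| <= #|B|)%N by apply: subset_leq_card.
have hSBr : (#|S|%:R <= #|B|%:R :> R) by rewrite ler_nat.
have hB0 : (0 <= #|B|%:R :> R) by [].
have [h0|hS] := posnP #|S|.
  rewrite (cards0_eq h0) big_set0 normr0.
  by rewrite mulr_ge0 // mulr_ge0 // ltW.
have [hle|hlt] := lerP (xi * #|B|%:R) #|S|%:R.
  have := @key B S w p xi hS (hreg S sSB hle) hB.
  have : 0 <= xi * (#|B|%:R - #|S|%:R) by rewrite mulr_ge0 ?subr_ge0 // ltW.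
  nra.
apply: le_trans (ler_norm_sum _ _ _) _.
have : \sum_(x in S) `|marg nu x w - p| <= #|S|%:R.
  rewrite -sum1_card natr_sum; apply: ler_sum => x _.
  by apply: abs01 => //; [apply: marg_ge0 | apply: marg_le1].
have : 0 <= xi * #|B|%:R by rewrite mulr_ge0 // ltW.
lra.
Qed.

Lemma perw (B : {set 'I_n}) w xi sigma :
  0 < xi -> regular_on nu xi B ->
  (forall s, 0 < nu s -> tv (@emp R X n s B) (@emp R X n sigma B) < xi) ->
  \sum_(x in B) `|marg nu x w - @emp R X n sigma B w| <= 8 * xi * #|B|%:R.
Proof.
move=> hxi hreg hB.
set p := @emp R X n sigma B w.
have hp0 : 0 <= p by apply: emp_ge0.
have hp1 : p <= 1 by apply: emp_le1.
have hB' : forall s, 0 < nu s -> `|@emp R X n s B w - p| <= 2 * xi.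
  move=> s hs; have := term_le_tv (@emp R X n s B) (@emp R X n sigma B) w.
  have := hB s hs; rewrite /p; lra.
rewrite (bigID (fun x => 0 <= marg nu x w - p)) /=.
set Sp := [set x in B | 0 <= marg nu x w - p].
set Sm := [set x in B | ~~ (0 <= marg nu x w - p)].
have e1 : \sum_(i in B | 0 <= marg nu i w - p) `|marg nu i w - p| =
          \sum_(i in Sp) (marg nu i w - p).
  rewrite [RHS](eq_bigl (fun i => (i \in B) && (0 <= marg nu i w - p))); last first.
    by move=> i; rewrite inE.
  by apply: eq_bigr => i /andP[_ h]; rewrite ger0_norm.
have e2 : \sum_(i in B | ~~ (0 <= marg nu i w - p)) `|marg nu i w - p| =
          - \sum_(i in Sm) (marg nu i w - p).
  rewrite [in RHS](eq_bigl (fun i => (i \in B) && ~~ (0 <= marg nu i w - p))); last first.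
    by move=> i; rewrite inE.
  rewrite -sumrN; apply: eq_bigr => i /andP[_ h]; rewrite ltr0_norm //.
  by rewrite ltNge.
have g1 := @lemG B Sp w p xi hxi ltac:(by apply/subsetP => i; rewrite inE => /andP[]) hreg hp0 hp1 hB'.
have g2 := @lemG B Sm w p xi hxi ltac:(by apply/subsetP => i; rewrite inE => /andP[]) hreg hp0 hp1 hB'.
rewrite e1 e2.
rewrite -mulrA in g1; rewrite -mulrA in g2; rewrite -mulrA.
have := ler_norm (\sum_(i in Sp) (marg nu i w - p)).
have := ler_norm (- \sum_(i in Sm) (marg nu i w - p)).
have := normrN (\sum_(i in Sm) (marg nu i w - p)).
lra.
Qed.

Lemma perB (B : {set 'I_n}) xi sigma :
  0 < xi -> regular_on nu xi B ->
  (forall s, 0 < nu s -> tv (@emp R X n s B) (@emp R X n sigma B) < xi) ->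
  \sum_(x in B) tv (marg nu x) (@emp R X n sigma B) <= 4 * #|X|%:R * xi * #|B|%:R.
Proof.
move=> hxi hreg hB.
rewrite /tv -mulr_sumr exchange_big /=.
have : \sum_w \sum_(x in B) `|marg nu x w - @emp R X n sigma B w| <=
       \sum_(w : X) (8 * xi * #|B|%:R).
  by apply: ler_sum => w _; apply: perw.
rewrite sumr_const => h.
apply: le_trans (ler_wpM2l _ h) _; first by rewrite invr_ge0.
have -> : #|(xpredT : pred X)| = #|X| by apply: eq_card.
rewrite -[_ *+ #|X|]mulr_natl le_eqVlt; apply/orP; left; apply/eqP; field => //.
Qed.

Lemma perB2 (B : {set 'I_n}) sigma :
  \sum_(x in B) tv (marg nu x) (@emp R X n sigma B) <= #|X|%:R * #|B|%:R.
Proof.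
rewrite mulrC mulr_natl -sumr_const; apply: ler_sum => x _; apply: tv_le => w.
  by rewrite marg_ge0 marg_le1.
by rewrite emp_ge0 emp_le1.
Qed.
End Help.

Lemma cond_facts (R : realFieldType) (X : finType) (n : nat)
  (mu : {ffun {ffun 'I_n -> X} -> R}) (Sj : {set {ffun 'I_n -> X}}) :
  is_prob mu -> 0 < mass mu Sj ->
  [/\ forall s, 0 <= cond mu Sj s, \sum_s cond mu Sj s = 1 &
      forall s, 0 < cond mu Sj s -> s \in Sj].
Proof.
move=> [hge0 _] hm; split.
- move=> s; rewrite ffunE; case: ifP => // _.
  by rewrite divr_ge0 // ltW.
- rewrite (eq_bigr (fun s => if s \in Sj then mu s / mass mu Sj else 0)); last first.
    by move=> s _; rewrite ffunE.
  rewrite -big_mkcond /= -mulr_suml mulfV //; exact: lt0r_neq0.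
- by move=> s; rewrite ffunE; case: ifP => // _; rewrite ltxx.
Qed.

Theorem lemma8 (R : archiRealFieldType) (X : finType) (eps : R) :
  0 < eps ->
  exists xi : R, 0 < xi /\
  exists n0 : nat, (0 < n0)%N /\
  forall n : nat, (n0 < n)%N ->
  forall (mu : {ffun {ffun 'I_n -> X} -> R})
         (PV : {set {set 'I_n}}) (PS : {set {set {ffun 'I_n -> X}}})
         (Sj : {set {ffun 'I_n -> X}}),
    is_prob mu ->
    partition PV [set: 'I_n] ->
    partition PS [set: {ffun 'I_n -> X}] ->
    homogeneous mu xi PV PS ->
    Sj \in PS ->
    0 < mass mu Sj ->
    regular_wrt (cond mu Sj) xi PV ->
    forall sigma, sigma \in Sj ->
      \sum_(B in PV) \sum_(x in B) tv (marg (cond mu Sj) x) (@emp R X n sigma B)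
        < eps * n%:R.
Proof.
move=> heps.
set K : R := #|X|%:R.
have hK : 0 <= K by [].
have hK1 : 0 < K + 1 by lra.
exists (eps / (6 * (K + 1))).
split; first by rewrite divr_gt0 // mulr_gt0.
exists 1%N; split => // n hn mu PV PS Sj hprob hPV hPS hhom hSj hm hreg sigma hsig.
set xi := eps / (6 * (K + 1)).
have hxi : 0 < xi by rewrite divr_gt0 // mulr_gt0.
have hxiK : xi * (K + 1) * 6 = eps by rewrite /xi; field; lra.
case: (@cond_facts _ _ _ mu Sj hprob hm) => nu0 nu1 nuS.
case: hhom => I [_ [_ [HM2 _]]].
case: hreg => J [sJ [hJn hJreg]].
rewrite -/xi in HM2 hJn hJreg.
set F := fun B : {set 'I_n} => \sum_(x in B) tv (marg (cond mu Sj) x) (@emp R X n sigma B).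
rewrite (bigID (fun B => B \in J)) /=.
set a := (\sum_(B in PV | B \in J) #|B|)%N.
set b := (\sum_(B in PV | B \notin J) #|B|)%N.
have hab : (a + b)%N = n.
  by rewrite /a /b -bigID -(card_partition hPV) cardsT card_ord.
have haJ : a = (\sum_(B in J) #|B|)%N.
  apply: eq_bigl => B; apply/idP/idP; first by case/andP.
  by move=> hB; rewrite hB andbT (subsetP sJ).
have h1 : \sum_(B in PV | B \in J) F B <= 4 * K * xi * a%:R.
  rewrite /a natr_sum mulr_sumr; apply: ler_sum => B /andP[hBPV hBJ].
  apply: (@perB _ _ _ _ nu0 nu1) => //; first exact: hJreg.
  move=> s hs; apply: (HM2 Sj B hSj hBPV) => //; exact: (nuS s hs).
have h2 : \sum_(B in PV | B \notin J) F B <= K * b%:R.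
  rewrite /b natr_sum mulr_sumr; apply: ler_sum => B _; exact: (@perB2 _ _ _ _ nu0 nu1).
have hn' : n%:R = a%:R + b%:R :> R by rewrite -natrD hab.
rewrite -haJ in hJn.
have ha0 : 0 <= a%:R :> R by [].
have hb0 : 0 <= b%:R :> R by [].
have hbn : b%:R <= xi * n%:R by lra.
have hn0 : 0 < n%:R :> R by rewrite ltr0n; apply: leq_ltn_trans hn.
have e1 : 4 * K * xi * a%:R <= 4 * K * xi * n%:R.
  apply: ler_wpM2l; first by apply: mulr_ge0; [apply: mulr_ge0 | exact: ltW].
  by rewrite hn' lerDl.
have e2 : K * b%:R <= K * (xi * n%:R) by apply: ler_wpM2l.
have e3 : K * xi * n%:R <= (K + 1) * xi * n%:R.
  apply: ler_wpM2r; first exact: ltW.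
  apply: ler_wpM2r; first exact: ltW.
  by rewrite lerDl.
have e4 : (K + 1) * xi * n%:R * 6 = eps * n%:R.
  by rewrite -hxiK; ring.
have e5 : 0 < eps * n%:R by rewrite mulr_gt0.
have e6 : K * (xi * n%:R) = K * xi * n%:R by ring.
have e7 : 4 * K * xi * n%:R = 4 * (K * xi * n%:R) by ring.
lra.
Qed.
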